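(* Let $f:\mathbb R^n\to\mathbb R\cup\{+\infty\}$, $g:\mathbb R^m\to\mathbb R\cup\{+\infty\}$, $h:\mathbb R^n\to\mathbb R\cup\{+\infty\}$ be closed convex functions, where $h$ is differentiable on its domain $\operatorname{dom} h$, which is an open convex set, and $f+h$ and $g$ are proper. Let $A\in\mathbb R^{m\times n}$. Let $X\subseteq\mathbb R^n$ and $Z\subseteq\mathbb R^m$ be compact convex sets, and suppose the primal problem $\text{minimize } f(x)+g(Ax)+h(x)$ has an optimal solution $x^\star\in\operatorname{int}(X)$ and the dual problem $\text{maximize } -(f+h)^*(-A^Tz)-g^*(z)$ has an optimal solution $z^\star\in\operatorname{int}(Z)$. Define, for $x\in\operatorname{dom}(f+h)$ and $z\in\operatorname{dom} g^*$, \[\eta(x,z)=\sup_{z'\in Z}\mathcal L(x,z')-\inf_{x'\in X}\mathcal L(x',z).\] Then $\eta(x,z)\ge 0$ for all $x\in\operatorname{dom}(f+h)$ and $z\in\operatorname{dom} g^*$, and $\eta(x,z)=0$ only if $x$ is optimal for the primal problem and $z$ is optimal for the dual problem.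
   Context: $g^*$ and $(f+h)^*$ denote convex conjugates. The Lagrangian is $\mathcal L(x,z)=f(x)+h(x)+\langle z,Ax\rangle-g^*(z)$, with the convention $\mathcal L(x,z)=+\infty$ if $x\notin\operatorname{dom}(f+h)$ and $\mathcal L(x,z)=-\infty$ if $x\in\operatorname{dom}(f+h)$ and $z\notin\operatorname{dom} g^*$. It is a standing assumption that the primal--dual optimality conditions $0\in\partial f(x)+\nabla h(x)+A^Tz$, $0\in\partial g^*(z)-Ax$ have a solution. *)

(* Defs.v *)
From HB Require Import structures.
From mathcomp Require Import all_boot all_order all_algebra.
From mathcomp Require Import all_classical all_reals all_analysis.
Set Implicit Arguments. Unset Strict Implicit. Unset Printing Implicit Defensive.
Import Order.TTheory GRing.Theory Num.Theory.
Import numFieldNormedType.Exports.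
Local Open Scope classical_set_scope.
Local Open Scope ring_scope.

Section Defs.
Variable R : realType.

Definition dotv k (u v : 'cV[R]_k) : R := \sum_(i < k) u i 0 * v i 0.

Definition edom k (F : 'cV[R]_k -> \bar R) : set 'cV[R]_k :=
  [set x | (F x < +oo)%E].

Definition convex_setv k (S : set 'cV[R]_k) : Prop :=
  forall x y (t : R), S x -> S y -> 0 <= t <= 1 -> S (t *: x + (1 - t) *: y).

(* convex extended-real-valued function: convex epigraph *)
Definition econvex k (F : 'cV[R]_k -> \bar R) : Prop :=
  forall x y (a b t : R), (F x <= a%:E)%E -> (F y <= b%:E)%E -> 0 <= t <= 1 ->
    (F (t *: x + (1 - t) *: y)%R <= (t * a + (1 - t) * b)%:E)%E.

(* closed function: closed epigraph, i.e. all sublevel sets closed (lsc) *)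
Definition eclosed k (F : 'cV[R]_k -> \bar R) : Prop :=
  forall a : R, closed [set x | (F x <= a%:E)%E].

Definition eproper k (F : 'cV[R]_k -> \bar R) : Prop :=
  (forall x, (-oo < F x)%E) /\ exists x, (F x < +oo)%E.

Definition conj k (F : 'cV[R]_k -> \bar R) (y : 'cV[R]_k) : \bar R :=
  ereal_sup [set ((dotv y x)%:E - F x)%E | x in [set: 'cV[R]_k]].

Definition subgrad k (F : 'cV[R]_k -> \bar R) (x v : 'cV[R]_k) : Prop :=
  F x \is a fin_num /\ forall y, (F x + (dotv v (y - x)%R)%:E <= F y)%E.

Definition is_gradient k (F : 'cV[R]_k -> \bar R) (x gr : 'cV[R]_k) : Prop :=
  edom F x /\ differentiable (fun y => fine (F y)) x /\
  forall u, 'd (fun y => fine (F y)) x u = dotv gr u.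

Variables (n m : nat) (f h : 'cV[R]_n -> \bar R) (g : 'cV[R]_m -> \bar R)
  (A : 'M[R]_(m, n)).

Definition fph (x : 'cV[R]_n) : \bar R := (f x + h x)%E.

Definition primal_obj (x : 'cV[R]_n) : \bar R := (f x + g (A *m x) + h x)%E.
Definition dual_obj (z : 'cV[R]_m) : \bar R :=
  (- conj fph (- (A^T *m z)) - conj g z)%E.

Definition primal_optimal (x : 'cV[R]_n) : Prop :=
  forall x', (primal_obj x <= primal_obj x')%E.
Definition dual_optimal (z : 'cV[R]_m) : Prop :=
  forall z', (dual_obj z' <= dual_obj z)%E.

Definition lagr (x : 'cV[R]_n) (z : 'cV[R]_m) : \bar R :=
  if `[< edom fph x >] then
    if `[< edom (conj g) z >] then
      (f x + h x + (dotv z (A *m x))%:E - conj g z)%E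
    else -oo%E
  else +oo%E.

Definition pdgap (X : set 'cV[R]_n) (Z : set 'cV[R]_m) x z : \bar R :=
  (ereal_sup [set lagr x z' | z' in Z] - ereal_inf [set lagr x' z | x' in X])%E.

End Defs.

(* Main.v *)
Require Import Defs.
From HB Require Import structures.
From mathcomp Require Import all_boot all_order all_algebra.
From mathcomp Require Import all_classical all_reals all_analysis.
From mathcomp Require Import ring lra.
Import Order.TTheory GRing.Theory Num.Theory.
Import numFieldNormedType.Exports.
Local Open Scope classical_set_scope.
Local Open Scope ring_scope.
Set Implicit Arguments. Unset Strict Implicit. Unset Printing Implicit Defensive.

Ltac clre := repeat match goal with
  | H : context [@Order.le ereal_display _ _ _] |- _ => clear H
  | H : context [@Order.lt ereal_display _ _ _] |- _ => clear H
  | H : @eq (extended _) _ _ |- _ => clear H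
  | H : context [@eq (extended _) _ _] |- _ => clear H
  | H : @eq (matrix _ _ _) _ _ |- _ => clear H
  | H : context [@eq (matrix _ _ _) _ _] |- _ => clear H end.
Ltac rlra := clre; lra.
Ltac rnra := clre; nra.

Section Aux.
Variable R : realType.

Lemma dotvDl k (u v w : 'cV[R]_k) : dotv (u + v) w = dotv u w + dotv v w.
Proof. rewrite /dotv -big_split /=; apply: eq_bigr => i _; rewrite !mxE; ring. Qed.
Lemma dotvDr k (u v w : 'cV[R]_k) : dotv w (u + v) = dotv w u + dotv w v.
Proof. rewrite /dotv -big_split /=; apply: eq_bigr => i _; rewrite !mxE; ring. Qed.
Lemma dotvZl k a (u w : 'cV[R]_k) : dotv (a *: u) w = a * dotv u w.
Proof. rewrite /dotv big_distrr /=; apply: eq_bigr => i _; rewrite !mxE; ring. Qed.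
Lemma dotvZr k a (u w : 'cV[R]_k) : dotv w (a *: u) = a * dotv w u.
Proof. rewrite /dotv big_distrr /=; apply: eq_bigr => i _; rewrite !mxE; ring. Qed.
Lemma dotvNl k (u w : 'cV[R]_k) : dotv (- u) w = - dotv u w.
Proof. rewrite /dotv -sumrN /=; apply: eq_bigr => i _; rewrite !mxE; ring. Qed.
Lemma dotvNr k (u w : 'cV[R]_k) : dotv w (- u) = - dotv w u.
Proof. rewrite /dotv -sumrN /=; apply: eq_bigr => i _; rewrite !mxE; ring. Qed.
Lemma dotvBl k (u v w : 'cV[R]_k) : dotv (u - v) w = dotv u w - dotv v w.
Proof. by rewrite dotvDl dotvNl. Qed.
Lemma dotvBr k (u v w : 'cV[R]_k) : dotv w (u - v) = dotv w u - dotv w v.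
Proof. by rewrite dotvDr dotvNr. Qed.
Lemma dotvC k (u w : 'cV[R]_k) : dotv u w = dotv w u.
Proof. rewrite /dotv; apply: eq_bigr => i _; ring. Qed.
Lemma dotv_ge0 k (u : 'cV[R]_k) : 0 <= dotv u u.
Proof. rewrite /dotv; apply: sumr_ge0 => i _; rewrite -expr2; exact: sqr_ge0. Qed.
Lemma dotv_coord k (u : 'cV[R]_k) i : u i 0 ^+ 2 <= dotv u u.
Proof.
rewrite /dotv (bigD1 i) //= expr2 lerDl; apply: sumr_ge0 => j _.
rewrite -expr2; exact: sqr_ge0.
Qed.
Lemma dotv_mul k l (A : 'M[R]_(k, l)) z x : dotv z (A *m x) = dotv (A^T *m z) x.
Proof.
rewrite /dotv.
under eq_bigr do rewrite mxE big_distrr.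
under [RHS]eq_bigr do rewrite mxE big_distrl.
rewrite exchange_big /=; apply: eq_bigr => i _; apply: eq_bigr => j _.
rewrite !mxE; ring.
Qed.
Lemma dotv_sq k (u v : 'cV[R]_k) :
  dotv (u + v) (u + v) = dotv u u + 2 * dotv u v + dotv v v.
Proof. rewrite !dotvDl !dotvDr (dotvC v u); ring. Qed.
Lemma dotv_amgm k (u v : 'cV[R]_k) : - ((dotv u u + dotv v v) / 2) <= dotv u v.
Proof.
have := dotv_ge0 (u + v); rewrite dotv_sq => H.
have := dotv_ge0 u; have := dotv_ge0 v; rlra.
Qed.

Lemma mxnorm_entry p q (M : 'M[R]_(p, q)) i j : `|M i j| <= `|M|.
Proof.
rewrite [X in _ <= X]/Num.norm /= mx_normrE.
exact: (le_bigmax _ (fun ij : 'I_p * 'I_q => `|M ij.1 ij.2|) (i, j)).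
Qed.

Lemma mxnorm_tr p q (M : 'M[R]_(p, q)) : `|M^T| <= `|M|.
Proof.
rewrite [X in X <= _]/Num.norm /= mx_normrE.
apply/bigmax_leP; split => [|ij _]; first exact: normr_ge0.
rewrite mxE; exact: mxnorm_entry.
Qed.

Lemma trmx_continuous p q : continuous (fun M : 'M[R]_(p, q) => M^T).
Proof.
move=> M A /nbhs_ballP [e e0 HA]; apply/nbhs_ballP; exists e => // N HN.
apply: HA; move: HN; rewrite -!ball_normE /ball_ /= => H.
rewrite -linearB /=; exact: le_lt_trans (mxnorm_tr _) H.
Qed.


Lemma epi_closed m (g : 'cV[R]_m -> \bar R) : eclosed g ->
  closed [set p : 'cV[R]_m * R | (g p.1 <= p.2%:E)%E].
Proof.
move=> gcl; rewrite -openC openE => -[w s] /= Hp.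
have Hlt : (s%:E < g w)%E by rewrite ltNge; apply/negP.
have [a sa ag] : exists2 a, s < a & (a%:E < g w)%E.
  move: Hlt; case E: (g w) => [x| |] //=.
    rewrite lte_fin => sx; exists ((s + x) / 2); first rlra.
    by rewrite lte_fin; rlra.
  by move=> _; exists (s + 1); [rlra | exact: ltry].
have op : open (~` [set w | (g w <= a%:E)%E]) by rewrite openC; exact: gcl.
have nU : nbhs w (~` [set w | (g w <= a%:E)%E]).
  apply: open_nbhs_nbhs; split => //=; rewrite leNgt ag //.
have nV : nbhs s [set t : R | t < a].
  apply/nbhs_ballP; exists (a - s); first by rewrite /= subr_gt0.
  move=> t; rewrite -ball_normE /ball_ /= => H.
  rewrite distrC in H; have := ler_norm (t - s); rlra.
rewrite /interior; exists (~` [set w | (g w <= a%:E)%E], [set t : R | t < a]) => //=.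
move=> [w' t] /= [H1 H2] H3; apply: H1 => /=.
apply: le_trans H3 _; rewrite lee_fin; rlra.
Qed.

Lemma box_compact m (y : 'cV[R]_m) (rho : R) :
  compact [set w : 'cV[R]_m | forall i, `[y i 0 - rho, y i 0 + rho]%classic (w i 0)].
Proof.
have C := @rV_compact _ m (fun i => `[y i 0 - rho, y i 0 + rho]%classic)
  (fun i => @segment_compact R _ _).
have := continuous_compact (continuous_subspaceT (@trmx_continuous 1 m)) C.
congr compact; apply/seteqP; split => w /=.
  by move=> [v Hv <-] i; rewrite mxE; exact: Hv.
move=> Hw; exists w^T; last exact: trmxK.
by move=> i; rewrite mxE; exact: Hw.
Qed.

Lemma dotv_continuous m : continuous (fun v : 'cV[R]_m => dotv v v).
Proof.
rewrite /dotv.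
have -> : (fun v : 'cV[R]_m => \sum_(i < m) v i 0 * v i 0) =
  \sum_(i < m) (fun v : 'cV[R]_m => v i 0 * v i 0).
  by rewrite fct_sumE.
elim/big_ind: _.
- exact: cst_continuous.
- by move=> f1 f2 H1 H2 x; apply: continuousD; [exact: H1 | exact: H2].
- move=> i _ x; apply: continuousM; exact: coord_continuous.
Qed.

Lemma Psi_continuous m (y : 'cV[R]_m) (c : R) :
  continuous (fun p : 'cV[R]_m * R => p.2 + c * dotv (p.1 - y) (p.1 - y)).
Proof.
move=> p; apply: cvgD.
  exact: cvg_snd.
apply: cvgM; first exact: cvg_cst.
have H1 : continuous (fun p : 'cV[R]_m * R => p.1 - y).
  by move=> p'; apply: cvgD; [exact: cvg_fst | exact: cvg_cst].
exact: (continuous_comp (H1 p) (@dotv_continuous m _)).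
Qed.


Lemma var_ineq (X C : R) : 0 <= C ->
  (forall t, 0 < t -> t <= 1 -> 0 <= X + t * C) -> 0 <= X.
Proof.
move=> C0 H; rewrite leNgt; apply/negP => X0.
pose t := - X / (- X + 2 * (C + 1)).
have den : 0 < - X + 2 * (C + 1) by rlra.
have tE : t * (- X + 2 * (C + 1)) = - X by rewrite /t divfK // gt_eqF.
have t0 : 0 < t by rewrite /t divr_gt0 //; rlra.
have t1 : t <= 1 by rewrite /t ler_pdivrMr // mul1r; rlra.
have := H t t0 t1; rnra.
Qed.

Section FM.
Variables (m : nat) (g : 'cV[R]_m -> \bar R) (z0 : 'cV[R]_m) (c0 : R).
Hypotheses (gcl : eclosed g) (gcv : econvex g) (gninf : forall w, (-oo < g w)%E)
  (gfin : exists w, (g w < +oo)%E)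
  (hmin : forall w, ((dotv z0 w - c0)%:E <= g w)%E).

Lemma FM y (r : R) : (r%:E < g y)%E -> exists k, (r%:E < (dotv k y)%:E - conj g k)%E.
Proof.
move=> ry.
have [d d0 Hd] : exists2 d : R, 0 < d &
    forall w, (g w <= r%:E)%E -> d ^+ 2 <= dotv (w - y) (w - y).
  have op : open (~` [set w | (g w <= r%:E)%E]) by rewrite openC; exact: gcl.
  have : nbhs y (~` [set w | (g w <= r%:E)%E]).
    by apply: open_nbhs_nbhs; split => //=; rewrite leNgt ry.
  move=> /nbhs_ballP [e e0 He]; exists e => // w gw.
  have nb : ~ ball y e w by move=> /He; apply.
  move: nb; rewrite -ball_normE /ball_ /= => /negP; rewrite -leNgt => ew.
  have ew' : e <= mx_norm (y - w) := ew.
  have nz : mx_norm (y - w) != 0 by apply/eqP => H0; rewrite H0 in ew'; move: e0 => /= e0; rlra.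
  have [[i j] Hij] := mx_norm_neq0 nz.
  rewrite Hij /= (ord1 j) !mxE ler_normr in ew'.
  have := dotv_coord (w - y) i; rewrite !mxE => Hc.
  move: e0 => /= e0; by case/orP: ew' => Hx; rnra.
set ly := dotv z0 y - c0.
set Q0 := dotv z0 z0.
pose q (v : 'cV[R]_m) := dotv v v.
pose c := 1 + (`|r - ly| + Q0) / d ^+ 2.
have Q0ge : 0 <= Q0 by exact: dotv_ge0.
have d2 : 0 < d ^+ 2 by exact: exprn_gt0.
have c1 : 1 <= c.
  by rewrite /c lerDl; apply: divr_ge0; [apply: addr_ge0 | apply: ltW].
have cd : c * d ^+ 2 = d ^+ 2 + (`|r - ly| + Q0).
  by rewrite /c mulrDl mul1r divfK // gt_eqF.
have LB : forall w s, (g w <= s%:E)%E ->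
    ly - Q0 / 2 - q (w - y) / 2 <= s.
  move=> w s gws.
  have : dotv z0 w - c0 <= s by rewrite -lee_fin; exact: le_trans (hmin w) gws.
  have e1 : dotv z0 w = dotv z0 y + dotv z0 (w - y) by rewrite dotvBr; ring.
  have := dotv_amgm z0 (w - y); rewrite /q /ly /Q0; rlra.
have far : forall w s, (g w <= s%:E)%E -> r < s + c * q (w - y).
  move=> w s gws; have qge : 0 <= q (w - y) by exact: dotv_ge0.
  case: (ltP (q (w - y)) (d ^+ 2)) => hq.
    have gw : (r%:E < g w)%E.
      by rewrite ltNge; apply/negP => /Hd; rewrite leNgt hq.
    have : r < s by rewrite -lte_fin; exact: lt_le_trans gw gws.
    rnra.
  have := LB w s gws; have := ler_norm (r - ly).
  have : c * d ^+ 2 <= c * q (w - y) by rewrite ler_pM2l //; rlra.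
  rnra.
have [wb [sb [gwb Hmin]]] : exists wb sb, (g wb <= sb%:E)%E /\
    forall w s, (g w <= s%:E)%E -> sb + c * q (wb - y) <= s + c * q (w - y).
  have [w1 gw1] := gfin.
  set s1 := fine (g w1).
  have gw1E : g w1 = s1%:E.
    by rewrite /s1 fineK // fin_numE gt_eqF ?gninf // lt_eqF.
  set V1 := s1 + c * q (w1 - y).
  set R2 := (V1 - ly + Q0 / 2) / (c - 1 / 2).
  pose lo := ly - Q0 / 2 - R2 / 2.
  pose K := [set w : 'cV[R]_m | forall i, `[y i 0 - (1 + R2), y i 0 + (1 + R2)]%classic (w i 0)]
     `*` `[lo, V1]%classic.
  have inbox : forall w s, (g w <= s%:E)%E -> s + c * q (w - y) <= V1 -> K (w, s).
    move=> w s gws HV; have hLB := LB w s gws.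
    have qge : 0 <= q (w - y) by exact: dotv_ge0.
    have hq : q (w - y) <= R2.
      rewrite /R2 ler_pdivlMr; last rlra.
      rnra.
    split => /=.
      move=> i; have := dotv_coord (w - y) i; rewrite !mxE /= in_itv /= => Hc.
      have := sqr_ge0 (w i 0 - y i 0 - 1 / 2).
      have := sqr_ge0 (w i 0 - y i 0 + 1 / 2).
      rewrite /q in hq => h1 h2; apply/andP; split; rnra.
    rewrite /= in_itv /=; apply/andP; split; rewrite /lo; rnra.
  pose E := K `&` [set p : 'cV[R]_m * R | (g p.1 <= p.2%:E)%E].
  have Ecomp : compact E.
    apply: compact_closedI; last exact: epi_closed.
    apply: compact_setX; first exact: box_compact.
    exact: segment_compact.
  have E1 : E (w1, s1).
    split; last by rewrite /= gw1E.
    by apply: inbox; rewrite ?gw1E // /V1.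
  have E0 : E !=set0 by exists (w1, s1).
  have [[wb sb] Eb Hm] := compact_EVT_min E0 Ecomp
    (continuous_subspaceT (@Psi_continuous m y c)).
  rewrite inE in Eb; exists wb, sb; split; first by case: Eb.
  move=> w s gws; case: (lerP (s + c * q (w - y)) V1) => HV.
    have := Hm (w, s); rewrite inE /=; apply; split => //; exact: inbox.
  have := Hm (w1, s1); rewrite inE /= => /(_ E1); rewrite -/V1 => H; rewrite /q in HV *; rlra.
have VAR : forall w s, (g w <= s%:E)%E ->
    sb - 2 * c * dotv (wb - y) (w - wb) <= s.
  move=> w s gws.
  suff : 0 <= (s - sb) + 2 * c * dotv (wb - y) (w - wb) by rlra.
  apply: (@var_ineq _ (c * q (w - wb))).
    by rewrite mulr_ge0 //; [rlra | exact: dotv_ge0].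
  move=> t t0 t1.
  have gt : (g (t *: w + (1 - t) *: wb) <= (t * s + (1 - t) * sb)%:E)%E.
    by apply: gcv => //; rewrite (ltW t0) t1.
  have := Hmin _ _ gt.
  have -> : t *: w + (1 - t) *: wb - y = (wb - y) + t *: (w - wb).
    by apply/matrixP => i j; rewrite !mxE; ring.
  rewrite /q [X in _ <= _ + c * X -> _]dotv_sq !(dotvZr, dotvZl) => H.
  rewrite -(pmulr_rge0 _ t0).
  rnra.
pose k := (2 * c) *: (y - wb).
have kE : forall w, dotv k w - dotv k wb = - (2 * c * dotv (wb - y) (w - wb)).
  move=> w; rewrite /k -dotvBr dotvZl -[y - wb]opprB dotvNl; ring.
have conjle : (conj g k <= (dotv k wb - sb)%:E)%E.
  apply: ge_ereal_sup => _ [w _ <-].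
  case E: (g w) => [sw| |].
  - have := VAR w sw; rewrite E lexx => /(_ isT) H.
    rewrite -EFinB lee_fin; have := kE w; rlra.
  - by rewrite /= leNye.
  - by have := gninf w; rewrite E.
have H1 : (r%:E < (dotv k y - (dotv k wb - sb))%:E)%E.
  rewrite lte_fin.
  have := far wb sb gwb; have := kE y.
  have -> : dotv (wb - y) (y - wb) = - q (wb - y).
    by rewrite /q -[y - wb]opprB dotvNr.
  have := dotv_ge0 (wb - y); rewrite -/(q _); rnra.
exists k; apply: (lt_le_trans H1).
by rewrite EFinB; apply: leeB.
Qed.

End FM.


Lemma grad_sub n (h : 'cV[R]_n -> \bar R) x0 gr : econvex h ->
  (forall x, (-oo < h x)%E) -> is_gradient h x0 gr ->
  forall y, (h x0 + (dotv gr (y - x0))%:E <= h y)%E.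
Proof.
move=> hcv hninf [dom0 [dif dE]] y.
have hx0 : h x0 = (fine (h x0))%:E.
  by rewrite fineK // fin_numE gt_eqF ?hninf // lt_eqF.
set a := fine (h x0) in hx0.
case Hy: (h y) => [b| |]; last by have := hninf y; rewrite Hy.
  2: by rewrite leey.
set d := y - x0.
pose F := fun z => fine (h z).
have Ft : forall t, 0 < t -> t <= 1 -> F (t *: d + x0) <= a + t * (b - a).
  move=> t t0 t1.
  have H : (h (t *: y + (1 - t) *: x0)%R <= (t * b + (1 - t) * a)%:E)%E.
    apply: hcv; [by rewrite Hy | by rewrite hx0 | by rewrite (ltW t0) t1].
  have -> : t *: d + x0 = t *: y + (1 - t) *: x0.
    by apply/matrixP => i j; rewrite !mxE; ring.
  rewrite /F; move: H; have := hninf (t *: y + (1 - t) *: x0).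
  case: (h _) => [u| |] //= _; rewrite lee_fin => H; rlra.
have Fa : F x0 = a by rewrite /F hx0.
rewrite hx0 -EFinD lee_fin leNgt; apply/negP => Hlt.
set D := dotv gr d in Hlt.
have cv : (fun t : R => t^-1 *: (F (t *: d + x0) - F x0)) @ 0^' --> D.
  have Hc := diff_derivable (v := d) dif; rewrite /derivable in Hc.
  have <- : 'D_d F x0 = D by rewrite deriveE // dE.
  exact: Hc.
have k0 : 0 < (a + D - b) / 2 by rlra.
move/cvgrPdist_lt : cv => /(_ _ k0).
rewrite near_withinE => /nbhs_ballP [e e0 He].
move: e0 => /= e0.
pose t := Num.min 1 (e / 2).
have t0 : 0 < t by rewrite /t lt_min ltr01 /=; rlra.
have t1 : t <= 1 by rewrite /t ge_min lexx.
have te : t <= e / 2 by rewrite /t ge_min lexx orbT.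
have Hb : ball (0 : R) e t.
  by rewrite -ball_normE /ball_ /= sub0r normrN ger0_norm ?ltW //; rlra.
have := He t Hb (lt0r_neq0 t0); rewrite /= Fa.
have := Ft t t0 t1.
set u := F (t *: d + x0) => Hu.
have : t^-1 * (u - a) <= b - a.
  rewrite -(ler_pM2l t0) mulrA mulfV ?gt_eqF // mul1r; rlra.
move=> Hq Hn; have := ler_norm (D - t^-1 *: (u - a)).
rewrite [_ *: _]/GRing.scale /=.
rlra.
Qed.


Lemma interior_seg k (S : set 'cV[R]_k) (x : 'cV[R]_k) : nbhs x S ->
  forall x' : 'cV[R]_k, exists t : R, [/\ 0 < t, t <= 1 & S (t *: x' + (1 - t) *: x)].
Proof.
move=> /nbhs_ballP [e e0 He] x'; move: e0 => /= e0.
set d := x' - x.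
have dn : 0 <= `|d| by exact: normr_ge0.
pose t := Num.min 1 (e / (2 * (`|d| + 1))).
have t0 : 0 < t by rewrite /t lt_min ltr01 /= divr_gt0 //; rlra.
have t1 : t <= 1 by rewrite /t ge_min lexx.
have te : t <= e / (2 * (`|d| + 1)) by rewrite /t ge_min lexx orbT.
exists t; split => //; apply: He.
have -> : t *: x' + (1 - t) *: x = x + t *: d.
  by apply/matrixP => i j; rewrite !mxE; ring.
rewrite -ball_normE /ball_ /= opprD addNKr normrN normrZ ger0_norm ?ltW //.
have : t * (2 * (`|d| + 1)) <= e by rewrite -ler_pdivlMr //; rlra.
rnra.
Qed.

Lemma conj_ge k (g : 'cV[R]_k -> \bar R) (z w : 'cV[R]_k) : ((dotv z w)%:E - g w <= conj g z)%E.
Proof. by apply: ereal_sup_ubound; exists w. Qed.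

Lemma conj_convex k (g : 'cV[R]_k -> \bar R) z1 z2 (a b t : R) :
  (conj g z1 <= a%:E)%E -> (conj g z2 <= b%:E)%E -> 0 <= t -> t <= 1 ->
  (conj g (t *: z1 + (1 - t) *: z2) <= (t * a + (1 - t) * b)%:E)%E.
Proof.
move=> h1 h2 t0 t1; apply: ge_ereal_sup => _ [w _ <-].
have f1 := le_trans (@conj_ge k g z1 w) h1; have f2 := le_trans (@conj_ge k g z2 w) h2.
move: f1 f2; case: (g w) => [s| |] /=.
- rewrite -!EFinB !lee_fin dotvDl !dotvZl => H1 H2; rnra.
- by move=> _ _; rewrite addeNy leNye.
- by [].
Qed.

End Aux.

Section E.
Variable R : realType.
Local Open Scope ereal_scope.

Lemma sum2_fin (a b : \bar R) : -oo < a -> -oo < b -> a + b < +oo ->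
  a = (fine a)%:E /\ b = (fine b)%:E.
Proof. by case: a => [a| |]; case: b => [b| |]. Qed.

Lemma sum3_fin (a b c : \bar R) : -oo < a -> -oo < b -> -oo < c -> a + b + c < +oo ->
  [/\ a = (fine a)%:E, b = (fine b)%:E & c = (fine c)%:E].
Proof. by case: a => [a| |]; case: b => [b| |]; case: c => [c| |]. Qed.

Lemma gap0 (S I : \bar R) (p : R) : p%:E <= S -> I <= p%:E -> S - I = 0 ->
  S = p%:E /\ I = p%:E.
Proof.
case: S => [s| |]; case: I => [i| |] //=; rewrite ?lee_fin.
- move=> H1 H2 /eqP; rewrite -EFinB eqe subr_eq0 => /eqP si.
  by subst; split; congr EFin; apply/eqP; rewrite eq_le ?H1 ?H2.
Qed.

End E.

Unset Implicit Arguments.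

Theorem mainTheorem1 (R : realType) (n m : nat)
  (f h : 'cV[R]_n -> \bar R) (g : 'cV[R]_m -> \bar R) (A : 'M[R]_(m, n))
  (X : set 'cV[R]_n) (Z : set 'cV[R]_m) (xs : 'cV[R]_n) (zs : 'cV[R]_m) :
  eclosed f -> econvex f -> eclosed g -> econvex g -> eclosed h -> econvex h ->
  open (edom h) -> convex_setv (edom h) ->
  (forall x, edom h x -> differentiable (fun y => fine (h y)) x) ->
  eproper (fph f h) -> eproper g ->
  (* standing assumption: the primal-dual optimality conditions have a solution *)
  (exists (x0 : 'cV[R]_n) (z0 : 'cV[R]_m) (v gr : 'cV[R]_n),
      subgrad f x0 v /\ is_gradient h x0 gr /\ v + gr + A^T *m z0 = 0 /\
      subgrad (conj g) z0 (A *m x0)) ->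
  compact X -> convex_setv X -> compact Z -> convex_setv Z ->
  interior X xs -> primal_optimal f h g A xs ->
  interior Z zs -> dual_optimal f h g A zs ->
  forall x z, edom (fph f h) x -> edom (conj g) z ->
    (0 <= pdgap f h g A X Z x z)%E /\
    (pdgap f h g A X Z x z = 0%E -> primal_optimal f h g A x /\ dual_optimal f h g A z).
Proof.
move=> fcl fcv gcl gcv hcl hcv hop hconv hdiff [fhninf fhfin] [gninf gfin]
  [x0 [z0 [v [gr [sf [sg [kk sc]]]]]]] Xc Xcv Zc Zcv xsX xsopt zsZ zsopt x z domx domz.
have fninf : forall y, (-oo < f y)%E.
  move=> y; have := fhninf y; rewrite /fph.
  by case: (f y) => [u| |] //; rewrite ?addNye ?ltNyr.
have hninf : forall y, (-oo < h y)%E.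
  move=> y; have := fhninf y; rewrite /fph.
  by case: (h y) => [u| |] //; rewrite ?addeNy ?ltNyr.
pose Fv y := fine (f y + h y).
have FvE : forall y, edom (fph f h) y -> (f y + h y)%E = (Fv y)%:E.
  by move=> y dy; rewrite /Fv fineK // fin_numE gt_eqF ?fhninf // lt_eqF.
have [w1 gw1] := gfin.
have conj_ninf : forall w, (-oo < conj g w)%E.
  move=> w; apply: (lt_le_trans _ (@conj_ge _ _ g w w1)).
  have := gninf w1; move: gw1; case: (g w1) => [u| |] //= _ _.
  by rewrite -EFinB ltNyr.
pose Gv w := fine (conj g w).
have GvE : forall w, edom (conj g) w -> conj g w = (Gv w)%:E.
  by move=> w dw; rewrite /Gv fineK // fin_numE gt_eqF ?conj_ninf // lt_eqF.
have lagrE : forall y w, edom (fph f h) y -> edom (conj g) w ->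
    lagr f h g A y w = (Fv y + dotv w (A *m y) - Gv w)%:E.
  move=> y w dy dw; rewrite /lagr (asboolT dy) (asboolT dw).
  by rewrite FvE // GvE // -EFinD -EFinB.
have lagr_nz : forall y w, edom (fph f h) y -> ~ edom (conj g) w ->
    lagr f h g A y w = -oo%E.
  by move=> y w dy dw; rewrite /lagr (asboolT dy) (asboolF dw).
have lagr_nx : forall y w, ~ edom (fph f h) y -> lagr f h g A y w = +oo%E.
  by move=> y w dy; rewrite /lagr (asboolF dy).
have [fx0fin sfx] := sf.
have sg' := sg; have [hdom0 _] := sg'.
have [G0fin scz] := sc.
set G0 := Gv z0.
have G0E : conj g z0 = G0%:E by rewrite /G0 /Gv fineK.
set fa := fine (f x0).
have faE : f x0 = fa%:E by rewrite /fa fineK.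
set ha := fine (h x0).
have haE : h x0 = ha%:E.
  by rewrite /ha fineK // fin_numE gt_eqF ?hninf // lt_eqF.
set F0 := fa + ha.
have vgr : v + gr = - (A^T *m z0).
  by apply/eqP; rewrite -subr_eq0 opprK kk.
have dkey : forall y, dotv v (y - x0) + dotv gr (y - x0) =
    dotv z0 (A *m x0) - dotv z0 (A *m y).
  by move=> y; rewrite -dotvDl vgr dotvNl -dotv_mul mulmxBr dotvBr; ring.
clear kk vgr.
have K2 : forall y, ((F0 + dotv z0 (A *m x0) - dotv z0 (A *m y))%:E <= f y + h y)%E.
  move=> y; have e1 := sfx y; have e2 := grad_sub hcv hninf sg y.
  have := leeD e1 e2; rewrite faE haE -!EFinD; apply: le_trans.
  by rewrite lee_fin; have := dkey y; rewrite /F0; rlra.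
have hmin : forall w, ((dotv z0 w - G0)%:E <= g w)%E.
  move=> w; have := @conj_ge _ _ g z0 w; rewrite G0E.
  case: (g w) => [s| |] //=.
  - by rewrite -EFinB !lee_fin => H; rlra.
  - by rewrite leey.
have K5 : (g (A *m x0) <= (dotv z0 (A *m x0) - G0)%:E)%E.
  rewrite leNgt; apply/negP => Hlt.
  have [k Hk] := FM gcl gcv gninf gfin hmin Hlt.
  have := scz k; rewrite G0E; have := conj_ninf k; move: Hk.
  case: (conj g k) => [u| |] //=.
  - rewrite -EFinB -EFinD lte_fin lee_fin dotvBr (dotvC (A *m x0) k) (dotvC (A *m x0) z0) => H1 _ H2.
    rlra.
have pxs := xsopt x0.
have [fsE gsE hsE] : [/\ f xs = (fine (f xs))%:E, g (A *m xs) = (fine (g (A *m xs)))%:E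
    & h xs = (fine (h xs))%:E].
  apply: sum3_fin => //; apply: (le_lt_trans pxs).
  rewrite /primal_obj faE haE.
  apply: (le_lt_trans (leeD (leeD (lexx _) K5) (lexx _))).
  by rewrite -!EFinD ltry.
set fs := fine (f xs) in fsE; set gs := fine (g (A *m xs)) in gsE.
set hs := fine (h xs) in hsE.
set pv := fs + gs + hs.
set Fs := fs + hs.
have pvE : primal_obj f h g A xs = pv%:E by rewrite /primal_obj fsE gsE hsE -!EFinD.
have domxs : edom (fph f h) xs by rewrite /edom /fph /= fsE hsE -EFinD ltry.
have FvXs : Fv xs = Fs by rewrite /Fv fsE hsE.
set q0 := F0 + dotv z0 (A *m x0) - G0.
have pvq0 : pv <= q0.
  rewrite -lee_fin -pvE; apply: (le_trans pxs).
  rewrite /primal_obj faE haE.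
  apply: (le_trans (leeD (leeD (lexx _) K5) (lexx _))).
  by rewrite -!EFinD lee_fin /q0 /F0; rlra.
have dual_le : forall y w, edom (fph f h) y -> edom (conj g) w ->
    (dual_obj f h g A w <= lagr f h g A y w)%E.
  move=> y w dy dw; rewrite lagrE // /dual_obj GvE // EFinB.
  apply: leeB => //; rewrite leeNl.
  have := @conj_ge _ _ (fph f h) (- (A^T *m w)) y.
  rewrite /fph FvE // -EFinB dotvNl -dotv_mul; apply: le_trans.
  by rewrite -EFinN lee_fin; rlra.
have Dz0 : (q0%:E <= dual_obj f h g A z0)%E.
  have cf : (conj (fph f h) (- (A^T *m z0)) <= (- (F0 + dotv z0 (A *m x0)))%:E)%E.
    apply: ge_ereal_sup => _ [y _ <-].
    have := K2 y; rewrite /fph; have := fhninf y; rewrite /fph.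
    case: (f y + h y) => [u| |] //= _.
      by rewrite -EFinB !lee_fin dotvNl -dotv_mul => H; rlra.
    by rewrite addeNy leNye.
  rewrite /dual_obj G0E /q0 EFinB; apply: leeB => //.
  by rewrite leeNr -EFinN.
have Dzs : (q0%:E <= dual_obj f h g A zs)%E := le_trans Dz0 (zsopt z0).
have domzs : edom (conj g) zs.
  rewrite /edom /= ltNge; apply/negP; rewrite leye_eq => /eqP H.
  by move: Dzs; rewrite /dual_obj H addeNy.
set Gs := Gv zs.
have K9 : forall y, edom (fph f h) y -> pv <= Fv y + dotv zs (A *m y) - Gs.
  move=> y dy; rewrite -lee_fin -lagrE //.
  apply: le_trans (dual_le _ _ dy domzs); apply: le_trans Dzs.
  by rewrite lee_fin.
have K10 : forall w, edom (conj g) w -> Fv xs + dotv w (A *m xs) - Gv w <= pv.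
  move=> w dw; have := @conj_ge _ _ g w (A *m xs).
  rewrite gsE GvE // -EFinB lee_fin FvXs /pv /Fs => H; rlra.
have Zzs : Z zs := nbhs_singleton zsZ.
have Xxs : X xs := nbhs_singleton xsX.
set S := ereal_sup [set lagr f h g A x z' | z' in Z].
set I := ereal_inf [set lagr f h g A x' z | x' in X].
have gapE : pdgap f h g A X Z x z = (S - I)%E by [].
have HS : (pv%:E <= S)%E.
  apply: (le_trans _ (ereal_sup_ubound _)); last by exists zs.
  by rewrite lagrE // lee_fin; exact: K9.
have HI : (I <= pv%:E)%E.
  apply: (le_trans (ereal_inf_lbound _)); first by exists xs.
  by rewrite lagrE // lee_fin; exact: K10.
rewrite gapE; split.
  by have := leeB HS HI; rewrite -EFinB subrr.
move=> /(gap0 HS HI) [Seq Ieq].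
have lagr_le : forall z', (lagr f h g A x z' <= pv%:E)%E.
  move=> z'; case: (pselect (edom (conj g) z')) => hz'; last first.
    by rewrite lagr_nz // leNye.
  rewrite lagrE // lee_fin leNgt; apply/negP => Hgt.
  have [t [t0 t1 Zt]] := interior_seg zsZ z'.
  have c1 : (conj g z' <= (Gv z')%:E)%E by rewrite GvE.
  have c2 : (conj g zs <= Gs%:E)%E by rewrite GvE.
  have cz := @conj_convex _ _ g z' zs (Gv z') Gs t c1 c2 (ltW t0) t1.
  have dzt : edom (conj g) (t *: z' + (1 - t) *: zs).
    by apply: (le_lt_trans cz); exact: ltry.
  have : (lagr f h g A x (t *: z' + (1 - t) *: zs) <= S)%E.
    by apply: ereal_sup_ubound; exists (t *: z' + (1 - t) *: zs).
  rewrite Seq lagrE // lee_fin dotvDl !dotvZl.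
  move: cz; rewrite GvE // lee_fin.
  have := K9 x domx.
  rnra.
have popt : primal_optimal f h g A x.
  move=> x'; apply: le_trans (xsopt x'); rewrite pvE.
  have Hg : (g (A *m x) <= (pv - Fv x)%:E)%E.
    rewrite leNgt; apply/negP => Hlt.
    have [k Hk] := FM gcl gcv gninf gfin hmin Hlt.
    have dk : edom (conj g) k.
      rewrite /edom /= ltNge; apply/negP; rewrite leye_eq => /eqP H.
      by move: Hk; rewrite H addeNy.
    have := lagr_le k; rewrite lagrE // lee_fin.
    move: Hk; rewrite GvE // -EFinB lte_fin => H1 H2; rlra.
  rewrite /primal_obj addeAC FvE //.
  apply: (le_trans (leeD (lexx _) Hg)).
  by rewrite -EFinD lee_fin; rlra.
split => //.
have lagr_ge : forall x', (pv%:E <= lagr f h g A x' z)%E.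
  move=> x'; case: (pselect (edom (fph f h) x')) => hx'; last first.
    by rewrite lagr_nx // leey.
  rewrite lagrE // lee_fin leNgt; apply/negP => Hlt.
  have [t [t0 t1 Xt]] := interior_seg xsX x'.
  have [fE hE] := sum2_fin (fninf x') (hninf x') hx'.
  set a1 := fine (f x') in fE; set b1 := fine (h x') in hE.
  have Fx' : Fv x' = a1 + b1 by rewrite /Fv fE hE.
  have cf : (f (t *: x' + (1 - t) *: xs)%R <= (t * a1 + (1 - t) * fs)%:E)%E.
    by apply: fcv; [rewrite fE | rewrite fsE | rewrite (ltW t0) t1].
  have ch : (h (t *: x' + (1 - t) *: xs)%R <= (t * b1 + (1 - t) * hs)%:E)%E.
    by apply: hcv; [rewrite hE | rewrite hsE | rewrite (ltW t0) t1].
  have cfh := leeD cf ch.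
  have dxt : edom (fph f h) (t *: x' + (1 - t) *: xs).
    by rewrite /edom /fph /=; apply: (le_lt_trans cfh); rewrite -EFinD ltry.
  have : (I <= lagr f h g A (t *: x' + (1 - t) *: xs)%R z)%E.
    by apply: ereal_inf_lbound; exists (t *: x' + (1 - t) *: xs).
  rewrite Ieq lagrE // lee_fin mulmxDr -!scalemxAr dotvDr !dotvZr.
  move: cfh; rewrite FvE // -EFinD lee_fin.
  have := K10 z domz; rewrite FvXs /Fs.
  move: Hlt; rewrite Fx'.
  rnra.
move=> z'.
have Hd : (pv%:E <= dual_obj f h g A z)%E.
  have cf : (conj (fph f h) (- (A^T *m z)) <= (- (pv + Gv z))%:E)%E.
    apply: ge_ereal_sup => _ [y _ <-].
    case: (pselect (edom (fph f h) y)) => hy.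
      rewrite /fph FvE // -EFinB lee_fin dotvNl -dotv_mul.
      have := lagr_ge y; rewrite lagrE // lee_fin => H; rlra.
    move: hy; rewrite /edom /= ltNge => /negP; rewrite negbK leye_eq => /eqP ->.
    by rewrite addeNy leNye.
  rewrite /dual_obj GvE //.
  have -> : pv = (pv + Gv z) - Gv z by ring.
  rewrite EFinB; apply: leeB => //.
  by rewrite leeNr -EFinN.
apply: le_trans Hd.
case: (pselect (edom (conj g) z')) => hz'.
  apply: (le_trans (dual_le _ _ domxs hz')).
  by rewrite lagrE // lee_fin; exact: K10.
move: hz'; rewrite /edom /= ltNge => /negP; rewrite negbK leye_eq => /eqP H.
by rewrite /dual_obj H addeNy leNye.
Qed.
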